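(* Let $M$ be the prefix matching generated by a diagonal matching rule $F$, and let $a_1\to b_1\to\cdots\to a_p\to b_p\to a_{p+1}=a_1$ be a directed cycle in $\Gamma^M$ as described in the context, with $a_i=(a_{i,0},\dots,a_{i,k})$. Then $d(a_{i,d_i-1},a_{i,d_i})=1$ for all $i$.
   Context: $G$ is a finite simple connected graph with distance $d$; $\ell(x_0,\dots,x_k)=\sum_{i=0}^{k-1}d(x_i,x_{i+1})$; sequences are elements of $I_{k,l}(G)=\{(x_0,\dots,x_k)\in V(G)^{k+1}:x_i\ne x_{i+1}\ \forall i,\ \ell=l\}$. $\Gamma$ is the directed graph on sequences with an edge $a\to b$ whenever $b$ is obtained from $a=(x_0,\dots,x_k)$ by deleting some $x_i$, $1\le i\le k-1$, with $\ell(b)=\ell(a)$. A matching is a set of pairwise vertex-disjoint edges of $\Gamma$; $\Gamma^M$ is $\Gamma$ with edges of $M$ reversed. Matching states: ''unmatched'', ''insert$(i,v)$'' (matched to $(x_0,\dots,x_i,v,x_{i+1},\dots,x_k)$), ''delete$(i)$'' (matched to $(x_0,\dots,\hat x_i,\dots,x_k)$). A prefix matching: whenever $(x_0,\dots,x_k)$ has state insert$(i,v)$ (resp. delete$(i)$), every sequence $(x_0,\dots,x_{i+1},y_{i+2},\dots,y_{k'})$ has the same state. A matching rule is a function $F$ from sequences to $\{\epsilon\}\cup\{\iota(v):v\in V(G)\}\cup\{\delta\}$; a prefix matching $M$ is generated by $F$ if for every sequence $(x_0,\dots,x_k)$, $k\ge1$, with unmatched prefix $(x_0,\dots,x_{k-1})$,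 its state is insert$(k-1,v)$ iff $F(x_0,\dots,x_k)=\iota(v)$ and delete$(k-1)$ iff $F(x_0,\dots,x_k)=\delta$. $F$ is valid if (1) $F(x_0,\dots,x_k)=\iota(v)$ implies $v\notin\{x_{k-1},x_k\}$, $d(x_{k-1},v)+d(v,x_k)=d(x_{k-1},x_k)$, $F(x_0,\dots,x_{k-1},v)=\epsilon$, $F(x_0,\dots,x_{k-1},v,x_k)=\delta$; (2) $F(x_0,\dots,x_k)=\delta$ implies $d(x_{k-2},x_{k-1})+d(x_{k-1},x_k)=d(x_{k-2},x_k)$ and $F(x_0,\dots,x_{k-2},x_k)=\iota(x_{k-1})$. A valid $F$ is diagonal if, w.r.t. the prefix matching it generates, $F(x_0,\dots,x_k)\ne\epsilon$ for every sequence with unmatched prefix and $d(x_{k-1},x_k)\ge2$. Cycle setting: $a_i\in I_{k,l}(G)$, $b_i\in I_{k-1,l}(G)$, each $a_i\to b_i$ is an edge of $\Gamma$ not in $M$, each $b_i\to a_{i+1}$ is a reversed edge of $M$; $d_i$ is the position of the entry of $a_i$ deleted to obtain $b_i$; $a_{i+1}=(b_{i,0},\dots,b_{i,c_i},u_i,b_{i,c_i+1},\dots,b_{i,k-1})$ where $b_i=(b_{i,0},\dots,b_{i,k-1})$; indices $i$ are taken modulo $p$. *)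

(* Defs.v *)
From HB Require Import structures.
From mathcomp Require Import all_boot.
Set Implicit Arguments. Unset Strict Implicit. Unset Printing Implicit Defensive.

Inductive rule_val (T : Type) := Eps | Iota of T | Delta.
Arguments Eps {T}. Arguments Delta {T}.

Section Defs.
Variables (T : finType) (adj : rel T).

Definition simple_connected : Prop :=
  symmetric adj /\ irreflexive adj /\ (forall x y, connect adj x y).

Definition walk_len (x y : T) (n : nat) : bool :=
  [exists p : n.-tuple T, path adj x p && (last x p == y)].

(* graph distance: least n with a walk of length n (a shortest walk in a
   connected graph has fewer than #|T| edges) *)
Definition dist (x y : T) : nat := find (walk_len x y) (iota 0 #|T|).

Definition is_seq (s : seq T) : bool := (0 < size s) && sorted (fun u v => u != v) s.

Fixpoint ell (s : seq T) : nat :=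
  match s with
  | x :: ((y :: _) as s') => dist x y + ell s'
  | _ => 0
  end.

Definition in_I (k l : nat) (s : seq T) : bool :=
  [&& is_seq s, size s == k.+1 & ell s == l].

Definition del (s : seq T) (i : nat) : seq T := take i s ++ drop i.+1 s.
Definition ins (s : seq T) (i : nat) (v : T) : seq T := take i.+1 s ++ v :: drop i.+1 s.

Definition gamma (a b : seq T) : Prop :=
  is_seq a /\ is_seq b /\
  exists i, 0 < i /\ i.+1 < size a /\ b = del a i /\ ell b = ell a.

Definition is_matching (M : seq T -> seq T -> Prop) : Prop :=
  (forall a b, M a b -> gamma a b) /\
  (forall a b b', M a b -> M a b' -> b = b') /\
  (forall a a' b, M a b -> M a' b -> a = a') /\
  (forall a b c, M a b -> M b c -> False).

Definition unmatched (M : seq T -> seq T -> Prop) (s : seq T) : Prop :=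
  (forall t, ~ M s t) /\ (forall t, ~ M t s).

Definition st_ins (M : seq T -> seq T -> Prop) (s : seq T) (i : nat) (v : T) : Prop :=
  i.+1 < size s /\ M (ins s i v) s.

Definition st_del (M : seq T -> seq T -> Prop) (s : seq T) (i : nat) : Prop :=
  0 < i /\ i.+1 < size s /\ M s (del s i).

Definition prefix_matching (M : seq T -> seq T -> Prop) : Prop :=
  (forall s i v, is_seq s -> st_ins M s i v ->
     forall y, is_seq y -> take i.+2 y = take i.+2 s -> st_ins M y i v) /\
  (forall s i, is_seq s -> st_del M s i ->
     forall y, is_seq y -> take i.+2 y = take i.+2 s -> st_del M y i).

(* M is generated by F; a sequence (x_0..x_k), k>=1, is written
   rcons (rcons pre x_{k-1}) x_k, so that k-1 = size pre *)
Definition generated (F : seq T -> rule_val T) (M : seq T -> seq T -> Prop) : Prop :=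
  forall pre u w, is_seq (rcons (rcons pre u) w) -> unmatched M (rcons pre u) ->
    (forall v, st_ins M (rcons (rcons pre u) w) (size pre) v <->
               F (rcons (rcons pre u) w) = Iota v) /\
    (st_del M (rcons (rcons pre u) w) (size pre) <->
               F (rcons (rcons pre u) w) = Delta).

Definition valid_rule (F : seq T -> rule_val T) : Prop :=
  (forall pre u w v, is_seq (rcons (rcons pre u) w) ->
     F (rcons (rcons pre u) w) = Iota v ->
     [/\ v != u, v != w, dist u v + dist v w = dist u w,
         F (rcons (rcons pre u) v) = Eps &
         F (rcons (rcons (rcons pre u) v) w) = Delta]) /\
  (forall pre t u w, is_seq (pre ++ [:: t; u; w]) ->
     F (pre ++ [:: t; u; w]) = Delta ->
     dist t u + dist u w = dist t w /\ F (rcons (rcons pre t) w) = Iota u).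

Definition diagonal (F : seq T -> rule_val T) (M : seq T -> seq T -> Prop) : Prop :=
  valid_rule F /\
  forall pre u w, is_seq (rcons (rcons pre u) w) -> unmatched M (rcons pre u) ->
    2 <= dist u w -> F (rcons (rcons pre u) w) <> Eps.

End Defs.

(* Main.v *)
Require Import Defs.
From mathcomp Require Import all_boot zify.
From Stdlib Require Import Classical.
Set Implicit Arguments. Unset Strict Implicit.

Section Aux.
Variables (T : finType) (adj : rel T).

Lemma dist_pos x y : x != y -> 0 < dist adj x y.
Proof.
move=> xy; rewrite /dist.
have : 0 < #|T| by apply/card_gt0P; exists x.
case: #|T| => // n _ /=.
suff -> : walk_len adj x y 0 = false by [].
apply/existsP => -[t]; rewrite tuple0 /=.
by rewrite (negbTE xy).
Qed.

Lemma ell_cat y P z R :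
  ell adj (y :: P ++ z :: R) = ell adj (y :: P) + dist adj (last y P) z + ell adj (z :: R).
Proof.
have ec : forall a b s, ell adj (a :: b :: s) = dist adj a b + ell adj (b :: s) by [].
elim: P y => [|w P IH] y; first by rewrite /= add0n.
by rewrite cat_cons !ec IH /=; lia.
Qed.

Fixpoint phi (s : seq T) : nat :=
  match s with [::] => 0 | x :: s' => ell adj (x :: s') + phi s' end.

Lemma phi_swap y P x x' q R :
  dist adj (last y P) x + dist adj x q = dist adj (last y P) x' + dist adj x' q ->
  phi (y :: P ++ x :: q :: R) + dist adj x' q = phi (y :: P ++ x' :: q :: R) + dist adj x q.
Proof.
elim: P y => [|w P IH] y H.
  rewrite /= in H *; lia.
have E1 : ell adj (y :: w :: P ++ x :: q :: R) = ell adj (y :: w :: P) + dist adj (last w P) x + (dist adj x q + ell adj (q :: R)) by rewrite -cat_cons (ell_cat y (w :: P)).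
have E2 : ell adj (y :: w :: P ++ x' :: q :: R) = ell adj (y :: w :: P) + dist adj (last w P) x' + (dist adj x' q + ell adj (q :: R)) by rewrite -cat_cons (ell_cat y (w :: P)).
rewrite /= in H.
have := IH w H.
have ec : forall a b s, ell adj (a :: b :: s) = dist adj a b + ell adj (b :: s) by [].
have pc : forall a s, phi (a :: s) = ell adj (a :: s) + phi s by [].
rewrite !cat_cons !pc -!cat_cons. rewrite ?cat_cons. rewrite ?cat_cons in E1 E2. move=> HH. rewrite E1 E2. lia.
Qed.

Lemma is_seq_take (s : seq T) m : is_seq s -> 0 < m -> is_seq (take m s).
Proof.
case/andP=> s0 ss m0; apply/andP; split; last exact: take_sorted.
by rewrite size_take; case: ifP.
Qed.


Lemma seq_neq (s : seq T) i x0 : is_seq s -> i.+1 < size s -> nth x0 s i != nth x0 s i.+1.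
Proof. case: s => [//|y s] /andP[_ /(pathP x0) H] /= Hi; exact: H. Qed.

Lemma ins_del (t : seq T) e x0 : 0 < e -> e < size t -> ins (del t e) e.-1 (nth x0 t e) = t.
Proof.
move=> e0 et; rewrite /ins /del prednK //.
have szt : size (take e t) = e by rewrite size_take et.
rewrite takel_cat ?szt // take_oversize ?szt //.
by rewrite drop_size_cat // -drop_nth // cat_take_drop.
Qed.

Lemma step (M : seq T -> seq T -> Prop) (F : seq T -> rule_val T)
  (HM : is_matching adj M) (Hpre : prefix_matching M)
  (Hgen : generated F M) (Hdiag : diagonal adj F M)
  (a b a' : seq T) (d : nat) (x0 : T) :
  is_seq a -> is_seq b -> 0 < d -> d.+1 < size a -> b = del a d ->
  ell adj b = ell adj a -> ~ M a b -> M a' b -> (exists t, M a t) ->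
  exists v, a' = take d a ++ v :: drop d.+1 a /\ dist adj (nth x0 a d.-1) v = 1.
Proof.
move=> isa isb d0 da Eb Eell nMab Ma'b [t0 Mat0].
case: HM => Hgam [Hfun [Hinj Hchain]].
case: Hpre => Hpi Hpd.
have noMb : forall c, ~ M b c by move=> c Mbc; exact: (Hchain _ _ _ Ma'b Mbc).
have noMa : forall c, ~ M c a by move=> c Mca; exact: (Hchain _ _ _ Mca Mat0).
set P := take d a.
have szP : size P = d by rewrite size_take; case: ifP => //; lia.
have isP : is_seq P by apply: is_seq_take.
have Eb' : b = P ++ drop d.+1 a by [].
have takeb : forall m, m <= d -> take m b = take m a.
  by move=> m md; rewrite Eb' takel_cat ?szP // take_takel.
have unP : unmatched M P.
  split.
  - move=> t MPt.
    case: (Hgam _ _ MPt) => _ [_ [e [e0 [eP [Et _]]]]].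
    have Hst : st_del M P e by split; [|split] => //; rewrite -Et.
    have := Hpd _ _ isP Hst b isb.
    rewrite takeb; last by lia.
    rewrite /P take_takel; last by lia.
    by move=> /(_ erefl) [_ [_ /noMb]].
  - move=> t MtP.
    case: (Hgam _ _ MtP) => ist [_ [e [e0 [et [EP _]]]]].
    have szP' : size P = (size t).-1.
      rewrite EP /del size_cat size_take size_drop; case: ifP; lia.
    have Hst : st_ins M P e.-1 (nth x0 t e).
      split; first by rewrite prednK //; lia.
      have -> : ins P e.-1 (nth x0 t e) = t by rewrite EP ins_del //; lia.
      exact: MtP.
    have := Hpi _ _ _ isP Hst a isa.
    rewrite /P take_takel; last by rewrite prednK //; lia.
    by move=> /(_ erefl) [_ /noMa].
destruct d as [|d]; first by [].
rewrite /=.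
set pre := take d a.
set xm := nth x0 a d.
set xd := nth x0 a d.+1.
set q := nth x0 a d.+2.
have EP : P = rcons pre xm by rewrite /P (take_nth x0) //; lia.
have Edr : drop d.+2 a = q :: drop d.+3 a by rewrite (drop_nth x0).
have Ea : a = P ++ xd :: q :: drop d.+3 a.
  by rewrite -Edr -(drop_nth x0 (n := d.+1)) ; [exact: (esym (cat_take_drop d.+1 a)) | lia].
have Eb2 : b = P ++ q :: drop d.+3 a by rewrite Eb' Edr.
have xmd : xm != xd by apply: seq_neq; lia.
have xdq : xd != q by apply: seq_neq.
have Hdist : dist adj xm q = dist adj xm xd + dist adj xd q.
  move: Eell; rewrite Ea Eb2.
  case EP' : P => [|y P'']; first by move: szP; rewrite EP'.
  have Hl : last y P'' = xm by rewrite -[last y P'']/(last x0 (y :: P'')) -EP' EP last_rcons.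
  rewrite !ell_cat Hl /=; lia.
have d2 : 2 <= dist adj xm q.
  rewrite Hdist; have := dist_pos xmd; have := dist_pos xdq; lia.
have EQ : take d.+2 b = rcons (rcons pre xm) q.
  rewrite Eb2 take_cat szP ltnNge leqnSn /= subSnn /= -EP.
  by rewrite take0 cats1.
have isQ : is_seq (rcons (rcons pre xm) q) by rewrite -EQ; apply: is_seq_take.
have unP' : unmatched M (rcons pre xm) by rewrite -EP.
have szpre : size pre = d by rewrite size_take; case: ifP => //; lia.
have takeQ : take d.+2 b = take d.+2 (rcons (rcons pre xm) q) by rewrite -EQ take_takel.
case: Hdiag => Hvalid Hdg.
have := Hdg pre xm q isQ unP' d2.
case: (Hgen pre xm q isQ unP') => Hgi Hgd.
case EF : (F (rcons (rcons pre xm) q)) => [|v|] // _.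
- have := Hpi _ _ _ isQ (proj2 (Hgi v) EF) b isb.
  rewrite szpre => /(_ takeQ) [_ Mib].
  have Ea' := Hinj _ _ _ Ma'b Mib.
  case: (proj1 Hvalid pre xm q v isQ EF) => vxm _ _ Feps _.
  exists v; split.
    rewrite Ea' /ins Eb' takel_cat ?szP // take_oversize ?szP //.
    by rewrite drop_size_cat.
  have Hp' : 0 < dist adj xm v by apply: dist_pos; rewrite eq_sym.
  suff : dist adj xm v < 2 by lia.
  rewrite ltnNge; apply/negP => H2.
  have isv : is_seq (rcons (rcons pre xm) v).
    rewrite -EP; move: isP; case EP' : P => [|y P''] //.
    rewrite /is_seq /= => Hp2.
    rewrite rcons_path Hp2 /=.
    have Hl : last y P'' = xm by rewrite -[last y P'']/(last x0 (y :: P'')) -EP' EP last_rcons.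
    by rewrite Hl eq_sym.
  by apply: (Hdg pre xm v isv unP' H2).
- have := Hpd _ _ isQ (proj2 Hgd EF) b isb.
  rewrite szpre => /(_ takeQ) [_ [_ /noMb]] //.
Qed.


Lemma decomp (a : seq T) D x0 : 0 < D -> D.+1 < size a ->
  exists y P R, [/\ take D a = y :: P, last y P = nth x0 a D.-1,
     a = y :: P ++ nth x0 a D :: nth x0 a D.+1 :: R & drop D.+1 a = nth x0 a D.+1 :: R].
Proof.
move=> D0 Da.
have E1 : take D a = rcons (take D.-1 a) (nth x0 a D.-1).
  by rewrite -(take_nth x0) ?prednK //; lia.
case Et : (take D a) => [|y P]; first by move: E1; rewrite Et; case: (take _ _).
exists y, P, (drop D.+2 a); split.
- by [].
- by rewrite -[last y P]/(last x0 (y :: P)) -Et E1 last_rcons.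
- rewrite -cat_cons -Et -(drop_nth x0) // -(drop_nth x0); last lia.
  by rewrite cat_take_drop.
- by rewrite -(drop_nth x0).
Qed.

End Aux.

Theorem corollary3p9 (T : finType) (adj : rel T)
  (HG : simple_connected adj)
  (F : seq T -> rule_val T) (M : seq T -> seq T -> Prop)
  (HM : is_matching adj M) (Hpre : prefix_matching M)
  (Hgen : generated F M) (Hdiag : diagonal adj F M)
  (k l p : nat) (a b : nat -> seq T) (d : nat -> nat)
  (Ha : forall i, i < p -> in_I adj k l (a i))
  (Hb : forall i, i < p -> in_I adj k.-1 l (b i))
  (Hab : forall i, i < p -> gamma adj (a i) (b i) /\ ~ M (a i) (b i))
  (Hba : forall i, i < p -> M (a (i.+1 %% p)) (b i))
  (Hd : forall i, i < p -> 0 < d i /\ (d i).+1 < size (a i) /\ b i = del (a i) (d i)) :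
  forall i (x0 : T), i < p ->
    dist adj (nth x0 (a i) (d i).-1) (nth x0 (a i) (d i)) = 1.
Proof.
move=> i x0 ip.
have p0 : 0 < p by lia.
pose f j := phi adj (a j).
pose g j := dist adj (nth x0 (a j) (d j).-1) (nth x0 (a j) (d j)).
have Hstep : forall j, j < p -> f j + g j = f (j.+1 %% p) + 1 /\ 1 <= g j.
  move=> j jp.
  have jp' : j.+1 %% p < p by rewrite ltn_pmod.
  case/and3P: (Ha j jp) => isa _ /eqP ella.
  case/and3P: (Ha _ jp') => isa' _ /eqP ella'.
  case/and3P: (Hb j jp) => isb _ /eqP ellb.
  case: (Hd j jp) => d0 [dsz Ebj].
  case: (Hab j jp) => _ nM.
  have Mab' := Hba j jp.
  have [t Mt] : exists t, M (a j) t.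
    case: j jp {jp' isa' ella' Mab' dsz Ebj d0 nM isa ella isb ellb} => [|j] jp.
      exists (b p.-1); have := Hba p.-1 (ltac:(by rewrite ltn_predL)).
      by rewrite prednK // modnn.
    exists (b j); have := Hba j (ltnW jp).
    by rewrite modn_small.
  have [v [Ea' Hv]] := step HM Hpre Hgen Hdiag x0 isa isb d0 dsz Ebj
     (etrans ellb (esym ella)) nM Mab' (ex_intro _ t Mt).
  have [y [P [R [Et Hl Ea Edr]]]] := decomp x0 d0 dsz.
  have g1 : 1 <= g j.
    rewrite /g; apply: dist_pos.
    have := seq_neq x0 isa (i := (d j).-1); rewrite prednK //; apply; lia.
  split => //.
  have Ea'2 : a (j.+1 %% p) = y :: P ++ v :: nth x0 (a j) (d j).+1 :: R.
    by rewrite Ea' Et Edr.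
  rewrite /f /g -Hl.
  set xd := nth x0 (a j) (d j) in Ea Ea'2 *.
  set xq := nth x0 (a j) (d j).+1 in Ea Ea'2 *.
  have ec : forall a b s, ell adj (a :: b :: s) = dist adj a b + ell adj (b :: s) by [].
  have Hell : ell adj (y :: P ++ v :: xq :: R) = ell adj (y :: P ++ xd :: xq :: R).
    by rewrite -Ea'2 -Ea ella ella'.
  rewrite !ell_cat !ec in Hell.
  rewrite Hl in Hell.
  have Hsw := phi_swap (adj:=adj) (y:=y) (P:=P) (x:=xd) (x':=v) (q:=xq) R.
  rewrite Hl in Hsw.
  rewrite Ea'2 {1}Ea.
  have := Hsw ltac:(lia).
  rewrite Hl; lia.
have mono : forall m n, m <= n -> n < p -> f m <= f n.
  move=> m n; elim: n => [|n IH] mn np.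
    by have -> : m = 0 by lia.
  case: (ltnP m n.+1) => mn'.
    have := IH ltac:(lia) ltac:(lia).
    case: (Hstep n ltac:(lia)); rewrite modn_small //; lia.
  by have -> : m = n.+1 by lia.
have [Hi gi] := Hstep i ip.
have [Hl gl] := Hstep p.-1 ltac:(lia).
rewrite prednK // modnn in Hl.
have m0i := mono 0 i ltac:(lia) ip.
have ml := mono i p.-1 ltac:(lia) ltac:(lia).
change (g i = 1).
case: (ltnP i.+1 p) => ip1.
  rewrite modn_small // in Hi.
  have := mono i.+1 p.-1 ltac:(lia) ltac:(lia); lia.
have Ei : i.+1 = p by lia.
rewrite Ei modnn in Hi; lia.
Qed.
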